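(* Applying a normalisation rule (NR1 or NR2) to a TDD does not change the tensor it represents. Moreover, a TDD is normal if and only if no normalisation rule is applicable to it.
   Context: Fix a finite index set $I$ with a linear order $\prec$. Indices take values in $\{0,1\}$; a tensor over $I$ is a map $\{0,1\}^I\to\mathbb{C}$ (tensors over subsets of $I$ are regarded as tensors over $I$ not depending on the other indices). Each index $x$ is regarded as the tensor $x(c)=c$, and $\overline{x}(c):=1-c$; operations on tensors are pointwise. A TDD over $I$ is $\mathcal F=(V,E,index,value,low,high,w)$: a rooted directed acyclic graph with finite node set $V$ partitioned into non-terminal nodes $V_N$ and terminal nodes $V_T$, root $r_{\mathcal F}$; $index:V_N\to I$; $value:V_T\to\mathbb{C}$; $low,high:V_N\to V$; edges are the low-edges $(v,low(v))$ and high-edges $(v,high(v))$, $v\in V_N$, plus a unique source-less incoming edge $e_r$ of the root; $w$ gives each edge a complex weight and $w_{\mathcal F}:=w(e_r)$. Node tensors: $\Phi(v)=value(v)$ for terminal $v$; otherwise $\Phi(v)=w_0\overline{x_v}\Phi(low(v))+w_1x_v\Phi(high(v))$ with $x_v=index(v)$ and $w_0,w_1$ the low-/high-edge weights. The TDD represents $\Phi(\mathcal F):=w_{\mathcal F}\Phi(r_{\mathcal F})$. Normality (w.r.t. $\prec$): the pivot of a tensor $\phi$ is the lexicographically smallest (compare at the $\prec$-smallest differing index, $0<1$) $\vec a$ with $|\phi(\vec a)|=\max_{\vec b}|\phi(\vec b)|$; $\phi$ is normal if $\phi=0$ or $\phi$ equals $1$ at its pivot. A TDD is normal if $\Phi(v)$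 is normal for every node $v$. Normalisation rules. NR1: if $v$ is a terminal node with $value(v)\neq0$ and $value(v)\neq1$, set its value to $1$ and replace the weight $w$ of each incoming edge of $v$ by $value(v)\cdot w$. NR2: let $v$ be a non-terminal node such that $\Phi(v)\neq0$ is not normal but $\Phi(low(v))$ and $\Phi(high(v))$ are both normal, with low-/high-edge weights $w_0,w_1$. If $\Phi(low(v))\neq0$ and either $\Phi(high(v))=0$ or $|w_0|\ge|w_1|$, let $w:=w_0$; otherwise let $w:=w_1$. Divide $w_0$ and $w_1$ by $w$ and multiply the weight of each incoming edge of $v$ by $w$. *)

(* Defs.v *)
From HB Require Import structures.
From mathcomp Require Import all_boot all_order all_algebra.
Set Implicit Arguments. Unset Strict Implicit. Unset Printing Implicit Defensive.
Import Order.TTheory GRing.Theory Num.Theory.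
Local Open Scope ring_scope.

Section TDD.
Variables (d : Order.disp_t) (I : finOrderType d) (C : numClosedFieldType).

Definition assignment := {ffun I -> bool}.
Definition tensor := assignment -> C.

Definition teq (f g : tensor) : Prop := forall a, f a = g a.

Definition tzero (f : tensor) : bool := [forall a : assignment, f a == 0].

Definition lexlt (a b : assignment) : Prop :=
  exists i : I, a i = false /\ b i = true /\
    (forall j : I, (j < i)%O -> a j = b j).

Definition is_pivot (f : tensor) (a : assignment) : Prop :=
  (forall b, `|f b| <= `|f a|) /\
  (forall b, `|f b| = `|f a| -> b = a \/ lexlt a b).

Definition normal_tensor (f : tensor) : Prop :=
  (forall a, f a = 0) \/ (exists a, is_pivot f a /\ f a = 1).

(* A TDD with (finite) node set V.  idx v = None means v is terminal
   (v in V_T), idx v = Some x means v is non-terminal with index x.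
   val v is the value of a terminal node; lo/hi the low/high successors and
   wlo/whi the weights of the low-/high-edge of a non-terminal node;
   root is the root and wroot = w(e_r) the weight of the root edge.
   (lo, hi, wlo, whi on terminal nodes and val on non-terminal nodes are
   irrelevant.) *)
Record tdd (V : finType) := Tdd {
  idx : V -> option I;
  val : V -> C;
  lo : V -> V;
  hi : V -> V;
  wlo : V -> C;
  whi : V -> C;
  root : V;
  wroot : C }.

Variable V : finType.
Implicit Types (F : tdd V) (v : V).

Definition nonterminal F v : bool := idx F v != None.
Definition terminal F v : bool := idx F v == None.

Definition edge F : rel V :=
  fun u w => nonterminal F u && ((w == lo F u) || (w == hi F u)).

Definition wf_tdd F : Prop :=
  (forall v, connect (edge F) (root F) v) /\
  (forall v, nonterminal F v ->
     ~~ connect (edge F) (lo F v) v /\ ~~ connect (edge F) (hi F v) v).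

(* Node tensors, computed by recursion with fuel; on an acyclic graph with
   #|V| nodes, fuel #|V| is enough to reach the terminals. *)
Fixpoint phi_fuel F (n : nat) (v : V) : tensor :=
  match n with
  | 0 => fun _ => 0
  | n'.+1 =>
    match idx F v with
    | None => fun _ => val F v
    | Some x => fun a =>
        wlo F v * (1 - (a x)%:R) * phi_fuel F n' (lo F v) a
        + whi F v * (a x)%:R * phi_fuel F n' (hi F v) a
    end
  end.

Definition node_tensor F v : tensor := phi_fuel F #|V| v.

Definition tdd_tensor F : tensor := fun a => wroot F * node_tensor F (root F) a.

Definition normal_tdd F : Prop := forall v, normal_tensor (node_tensor F v).

Definition nr1_applicable F v : Prop :=
  terminal F v /\ val F v <> 0 /\ val F v <> 1.

Definition apply_nr1 F v : tdd V :=
  let c := val F v in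
  {| idx := idx F;
     val := fun u => if u == v then 1 else val F u;
     lo := lo F; hi := hi F;
     wlo := fun u => if nonterminal F u && (lo F u == v)
                     then c * wlo F u else wlo F u;
     whi := fun u => if nonterminal F u && (hi F u == v)
                     then c * whi F u else whi F u;
     root := root F;
     wroot := if root F == v then c * wroot F else wroot F |}.

Definition nr2_applicable F v : Prop :=
  nonterminal F v /\ ~~ tzero (node_tensor F v) /\
  ~ normal_tensor (node_tensor F v) /\
  normal_tensor (node_tensor F (lo F v)) /\
  normal_tensor (node_tensor F (hi F v)).

Definition nr2_weight F v : C :=
  if ~~ tzero (node_tensor F (lo F v)) &&
     (tzero (node_tensor F (hi F v)) || (`|whi F v| <= `|wlo F v|))
  then wlo F v else whi F v.

Definition apply_nr2 F v : tdd V :=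
  let w := nr2_weight F v in
  {| idx := idx F; val := val F; lo := lo F; hi := hi F;
     wlo := fun u => if u == v then wlo F u / w
                     else if nonterminal F u && (lo F u == v)
                     then w * wlo F u else wlo F u;
     whi := fun u => if u == v then whi F u / w
                     else if nonterminal F u && (hi F u == v)
                     then w * whi F u else whi F u;
     root := root F;
     wroot := if root F == v then w * wroot F else wroot F |}.

End TDD.

(* Main.v *)
Require Import Defs.
From HB Require Import structures.
From mathcomp Require Import all_boot all_order all_algebra.
From mathcomp Require Import ring.
From Stdlib Require Import Classical FunctionalExtensionality.
Set Implicit Arguments. Unset Strict Implicit. Unset Printing Implicit Defensive.
Import Order.TTheory GRing.Theory Num.Theory.
Local Open Scope ring_scope.

Section Aux.
Variables (d : Order.disp_t) (I : finOrderType d) (C : numClosedFieldType) (V : finType).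
Variable F : tdd I C V.

Definition R (u : V) : {set V} := [set w | connect (edge F) u w].

Lemma R_child u : wf_tdd F -> nonterminal F u ->
  (#|R (lo F u)| < #|R u|)%N /\ (#|R (hi F u)| < #|R u|)%N.
Proof.
move=> [_ Hw] Hn; have [H1 H2] := Hw u Hn.
have key : forall w, (w == lo F u) || (w == hi F u) -> ~~ connect (edge F) w u ->
   (#|R w| < #|R u|)%N.
  move=> w Hwu Hnc; apply: proper_card; apply/properP; split.
    apply/subsetP=> x; rewrite !inE => Hx.
    apply: connect_trans Hx; apply: connect1; rewrite /edge Hn Hwu //.
  by exists u; rewrite !inE ?connect0 //.
by split; apply: key; rewrite ?eqxx ?orbT.
Qed.

Lemma phi_stable u n m : wf_tdd F -> (#|R u| <= n)%N -> (n <= m)%N ->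
  phi_fuel F n u = phi_fuel F m u.
Proof.
move=> Hwf; elim: n u m => [|n IH] u m.
  by rewrite leqn0 => /eqP/cards0_eq/setP/(_ u); rewrite !inE connect0.
move=> Hr; case: m => [//|m] Hnm /=.
case Hi: (idx F u) => [x|//].
have Hn : nonterminal F u by rewrite /nonterminal Hi.
have [Hl Hh] := R_child Hwf Hn.
rewrite (IH (lo F u) m) ?(IH (hi F u) m) //.
  by rewrite -ltnS (leq_trans Hh).
by rewrite -ltnS (leq_trans Hl).
Qed.

Lemma R_le u : (#|R u| <= #|V|)%N.
Proof. exact: max_card. Qed.

Lemma card_pos (u : V) : (0 < #|V|)%N.
Proof. by apply/card_gt0P; exists u. Qed.

Lemma node_unfold u x a : wf_tdd F -> idx F u = Some x ->
  node_tensor F u a = wlo F u * (1 - (a x)%:R) * node_tensor F (lo F u) a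
        + whi F u * (a x)%:R * node_tensor F (hi F u) a.
Proof.
move=> Hwf Hi; rewrite /node_tensor.
have Hn : nonterminal F u by rewrite /nonterminal Hi.
have [Hl Hh] := R_child Hwf Hn.
have := card_pos u; case E: #|V| => [//|N] _ /=.
rewrite Hi (@phi_stable (lo F u) N N.+1) ?(@phi_stable (hi F u) N N.+1) //.
  by rewrite -ltnS -E (leq_trans Hh) // R_le.
by rewrite -ltnS -E (leq_trans Hl) // R_le.
Qed.

Lemma node_term u : idx F u = None -> forall a, node_tensor F u a = Defs.val F u.
Proof.
move=> Hi a; rewrite /node_tensor.
have := card_pos u; case: #|V| => [//|N] _ /=; by rewrite Hi.
Qed.

End Aux.

Section NR.
Variables (d : Order.disp_t) (I : finOrderType d) (C : numClosedFieldType) (V : finType).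
Variable F : tdd I C V.

Lemma nr1_inv v n u a : terminal F v ->
  phi_fuel F n u a = (if u == v then Defs.val F v else 1) * phi_fuel (apply_nr1 F v) n u a.
Proof.
rewrite /terminal => /eqP Hv.
elim: n u => [|n IH] u /=; first by rewrite mulr0.
case: (eqVneq u v) => [->|neq].
  by rewrite Hv /= mulr1.
rewrite ?mul1r; case Hi: (idx F u) => [x|]; last by [].
have Hn : nonterminal F u by rewrite /nonterminal Hi.
rewrite Hn /= (IH (lo F u)) (IH (hi F u)).
case: (lo F u == v); case: (hi F u == v); rewrite ?mul1r; ring.
Qed.

Lemma nr1_ok v : nr1_applicable F v ->
     teq (tdd_tensor (apply_nr1 F v)) (tdd_tensor F).
Proof.
move=> [Ht _] a; rewrite /tdd_tensor /node_tensor (@nr1_inv v #|V| (Defs.root F) a Ht) /=.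
case: (Defs.root F == v); rewrite ?mul1r //; ring.
Qed.

Lemma nr2_inv v n u a : wf_tdd F -> nonterminal F v -> nr2_weight F v != 0 ->
  phi_fuel F n u a = (if u == v then nr2_weight F v else 1) * phi_fuel (apply_nr2 F v) n u a.
Proof.
move=> [_ Hw] Hv Hw0.
have [Hl Hh] := Hw v Hv.
have Hlv : lo F v != v by apply: contraNneq Hl => ->; rewrite connect0.
have Hhv : hi F v != v by apply: contraNneq Hh => ->; rewrite connect0.
elim: n u => [|n IH] u /=; first by rewrite mulr0.
case: (eqVneq u v) => [->|neq].
  move: Hv; rewrite /nonterminal /=; case: (idx F v) => [x|//] _.
  rewrite (IH (lo F v)) (IH (hi F v)) (negbTE Hlv) (negbTE Hhv) !mul1r.
  by field.
rewrite ?mul1r; case Hi: (idx F u) => [y|]; last by [].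
have Hn : nonterminal F u by rewrite /nonterminal Hi.
rewrite Hn /= (IH (lo F u)) (IH (hi F u)).
case: (lo F u == v); case: (hi F u == v); rewrite ?mul1r; ring.
Qed.

End NR.

Section NR3.
Variables (d : Order.disp_t) (I : finOrderType d) (C : numClosedFieldType) (V : finType).
Variable F : tdd I C V.

Lemma nr2_w0 v : wf_tdd F -> nr2_applicable F v -> nr2_weight F v != 0.
Proof.
move=> Hwf [Hn [Hz _]].
move: Hn; rewrite /nonterminal; case Hi: (idx F v) => [x|//] _.
apply: contra Hz => /eqP Hw0; apply/forallP => a.
rewrite (node_unfold _ Hwf Hi).
move: Hw0; rewrite /nr2_weight; case: ifP => [/andP [HL HH] | Hc] Hw0.
  rewrite Hw0 !mul0r add0r.
  case/orP: HH => [/forallP HH | Hle].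
    by rewrite (eqP (HH a)) mulr0.
  move: Hle; rewrite Hw0 normr0 normr_le0 => /eqP ->.
  by rewrite !mul0r.
rewrite Hw0 !mul0r addr0.
case: (boolP (tzero (node_tensor F (lo F v)))) => [/forallP HL | HL].
  by rewrite (eqP (HL a)) mulr0.
by move: Hc; rewrite HL Hw0 normr0 normr_ge0 orbT.
Qed.

Lemma nr2_ok v : wf_tdd F -> nr2_applicable F v ->
     teq (tdd_tensor (apply_nr2 F v)) (tdd_tensor F).
Proof.
move=> Hwf Ha a.
have Hw0 := nr2_w0 Hwf Ha.
have [Hn _] := Ha.
rewrite /tdd_tensor /node_tensor (@nr2_inv _ _ _ _ F v #|V| (Defs.root F) a Hwf Hn Hw0) /=.
case: (Defs.root F == v); rewrite ?mul1r //; ring.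
Qed.

End NR3.

Section NR4.
Variables (d : Order.disp_t) (I : finOrderType d) (C : numClosedFieldType) (V : finType).
Variable F : tdd I C V.

Lemma const_normal (c : C) : c = 0 \/ c = 1 -> normal_tensor (fun _ : assignment I => c).
Proof.
case=> ->; first by left.
right; exists [ffun => false]; split=> //; split=> // b _.
case: (eqVneq b [ffun => false]) => [->|nb]; first by left.
right.
have [i0 Hb] : exists i, b i.
  apply/existsP; apply: contraNT nb; rewrite negb_exists => /forallP H.
  by apply/eqP/ffunP => i; rewrite ffunE; apply/negbTE/H.
case: (@arg_minP _ I I i0 (fun j => b j) id Hb) => k Hk Hmin.
exists k; rewrite ffunE; split=> //; split=> // j Hj.
rewrite ffunE; apply/esym/negbTE/negP => Hbj.
by have := Hmin j Hbj; rewrite leNgt Hj.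
Qed.

Lemma nt_const (c : C) : normal_tensor (fun _ : assignment I => c) -> c = 0 \/ c = 1.
Proof.
case=> [H | [a [_ H]]]; [left; exact: (H [ffun => false]) | by right].
Qed.

Lemma normal_iff : wf_tdd F ->
  (normal_tdd F <-> ~ (exists v : V, nr1_applicable F v \/ nr2_applicable F v)).
Proof.
move=> Hwf; split.
  move=> Hn [v [[Ht [H0 H1]] | [_ [_ [Hnn _]]]]]; last exact: Hnn.
  have Hc := Hn v.
  have E : node_tensor F v = fun _ => Defs.val F v.
    by apply: functional_extensionality => a; apply: node_term; apply/eqP.
  by rewrite E in Hc; case: (nt_const Hc).
move=> Hno.
suff H : forall n u, (#|R F u| <= n)%N -> normal_tensor (node_tensor F u).
  by move=> u; apply: (H #|V|); apply: R_le.
elim=> [|n IH] u.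
  by rewrite leqn0 => /eqP/cards0_eq/setP/(_ u); rewrite !inE connect0.
move=> Hr.
case Hi: (idx F u) => [x|].
  have Hn : nonterminal F u by rewrite /nonterminal Hi.
  have [Hl Hh] := R_child Hwf Hn.
  apply: NNPP => Hnn; apply: Hno; exists u; right.
  split=> //; split; last split=> //; last split.
  - apply/negP => /forallP Hz; apply: Hnn; left => a; exact/eqP/Hz.
  - by apply: IH; rewrite -ltnS (leq_trans Hl).
  - by apply: IH; rewrite -ltnS (leq_trans Hh).
have E : node_tensor F u = fun _ => Defs.val F u.
  by apply: functional_extensionality => a; apply: node_term.
rewrite E; apply: const_normal.
case: (eqVneq (Defs.val F u) 0) => [|H0]; first by left.
case: (eqVneq (Defs.val F u) 1) => [|H1]; first by right.
exfalso; apply: Hno; exists u; left; split; first by rewrite /terminal Hi.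
by split; apply/eqP.
Qed.

End NR4.

Theorem theorem1 (d : Order.disp_t) (I : finOrderType d)
  (C : numClosedFieldType) (V : finType) (F : tdd I C V) :
  wf_tdd F ->
  (forall v : V, nr1_applicable F v ->
     teq (tdd_tensor (apply_nr1 F v)) (tdd_tensor F)) /\
  (forall v : V, nr2_applicable F v ->
     teq (tdd_tensor (apply_nr2 F v)) (tdd_tensor F)) /\
  (normal_tdd F <-> ~ (exists v : V, nr1_applicable F v \/ nr2_applicable F v)).
Proof.
move=> Hwf; split; first by move=> v; apply: nr1_ok.
split; first by move=> v; apply: nr2_ok.
exact: normal_iff.
Qed.
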